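(* Consider a $k$-label broadcasting tree with parameter $\theta\in(0,1)$ (see context), and for a vertex $v$ let $X_t^{(i)}(\ell_{T_{\leq t}(v)})=\mathbb{P}(\ell(v)=i\mid \ell_{T_{\leq t}(v)})$ under the uniform prior on $\ell(v)\in[k]$. Then for any $i\neq j\in[k]$ and $t\geq 2$, $$\log\frac{X_t^{(i)}(\ell_{T_{\leq t}(v)})}{X_t^{(j)}(\ell_{T_{\leq t}(v)})}=\log\frac{X_1^{(i)}(\ell_{T_{1}(v)})}{X_1^{(j)}(\ell_{T_{1}(v)})}+\sum_{u\in\mathcal{C}^{\rm u}(v)}\log\frac{1+\frac{k\theta}{1-\theta}X_{t-1}^{(i)}(\ell_{T_{\leq t-1}(u)})}{1+\frac{k\theta}{1-\theta}X_{t-1}^{(j)}(\ell_{T_{\leq t-1}(u)})}.$$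
   Context: $k$-label broadcasting tree: labels lie in $[k]=\{1,\dots,k\}$; conditionally on the label of a vertex $v$, each child $u$ independently has $\ell(u)=\ell(v)$ with probability $\theta+\frac{1-\theta}{k}$ and $\ell(u)=l$ for each $l\in[k]\setminus\{\ell(v)\}$ with probability $\frac{1-\theta}{k}$. Each vertex's children are split into labeled children $\mathcal{C}^{\rm l}(v)$ (label revealed) and unlabeled children $\mathcal{C}^{\rm u}(v)$. $\ell_{T_{\leq t}(v)}$ denotes the revealed labels in the subtree of depth $\leq t$ rooted at $v$, and $\ell_{T_1(v)}$ the revealed labels among the children of $v$. *)

(* Defs.v *)
From HB Require Import structures.
From mathcomp Require Import all_boot all_order all_algebra.
From mathcomp Require Import all_classical all_reals.
From mathcomp Require Import exp.
Set Implicit Arguments. Unset Strict Implicit. Unset Printing Implicit Defensive.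
Import Order.TTheory GRing.Theory Num.Theory.
Local Open Scope ring_scope.

(* Each child of a
   vertex is stored together with its observation: [Some l] if the child is a
   labeled child (its label l in [k] is revealed), [None] if it is an
   unlabeled child.  The root's own label is not observed. *)
Inductive btree (k : nat) : Type :=
  BNode of seq (option 'I_k * btree k).

Definition children k (T : btree k) : seq (option 'I_k * btree k) :=
  let: BNode cs := T in cs.

Section Broadcast.
Variables (R : realType) (k : nat) (theta : R).

Definition bcM (a b : 'I_k) : R :=
  (if a == b then theta else 0) + (1 - theta) / k%:R.

Definition obsw (o : option 'I_k) (l : 'I_k) : R :=
  if o is Some l' then (if l' == l then 1 else 0) else 1.

(* lik t i T = P(revealed labels of T_{<= t}(v) | l(v) = i): the joint law is
   the product of kernel weights over edges, and all hidden labels of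
   vertices at depth 1..t are summed out (written in nested form). *)
Fixpoint lik (t : nat) (i : 'I_k) (T : btree k) {struct t} : R :=
  match t with
  | 0 => 1
  | t'.+1 => \prod_(c <- children T)
               (\sum_(l < k) bcM i l * obsw c.1 l * lik t' l c.2)
  end.

(* X_t^{(i)} = P(l(v) = i | l_{T_{<=t}(v)}) under the uniform prior on [k] *)
Definition post (t : nat) (i : 'I_k) (T : btree k) : R :=
  (k%:R^-1 * lik t i T) / (\sum_(j < k) k%:R^-1 * lik t j T).

End Broadcast.

(* Main.v *)
Require Import Defs.
From HB Require Import structures.
From mathcomp Require Import all_boot all_order all_algebra.
From mathcomp Require Import all_classical all_reals.
From mathcomp Require Import exp.
From mathcomp Require Import ring lra.
Import Order.TTheory GRing.Theory Num.Theory.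
Local Open Scope ring_scope.

Section Aux.
Variables (R : realType) (k : nat) (theta : R).
Hypotheses (htheta0 : 0 < theta) (htheta1 : theta < 1) (kpos : (0 < k)%N).

Definition rr t (c : option 'I_k * btree k) (a : 'I_k) : R :=
  \sum_(l < k) bcM theta a l * obsw R c.1 l * lik theta t l c.2.

Lemma lik_S t a T : lik theta t.+1 a T = \prod_(c <- children T) rr t c a.
Proof. by []. Qed.

Lemma kR_gt0 : 0 < (k%:R : R).
Proof. by rewrite ltr0n. Qed.

Lemma q_gt0 : 0 < (1 - theta) / (k%:R : R).
Proof. apply: divr_gt0; [rewrite subr_gt0 // | exact: kR_gt0]. Qed.

Lemma bcM_gt0 (a b : 'I_k) : 0 < bcM theta a b.
Proof.
rewrite /bcM; case: (a == b) => /=; [apply: addr_gt0 => //; exact: q_gt0 | rewrite add0r; exact: q_gt0].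
Qed.

Lemma rr_lab t c a l' : c.1 = Some l' -> rr t c a = bcM theta a l' * lik theta t l' c.2.
Proof.
move=> Hc; rewrite /rr Hc (bigD1 l') //= eqxx mulr1 big1 ?addr0 // => l Hl.
by rewrite /= eq_sym (negbTE Hl) mulr0 mul0r.
Qed.

Lemma rr_unlab t c a : c.1 = None ->
  rr t c a = theta * lik theta t a c.2 +
             (1 - theta) / k%:R * \sum_(l < k) lik theta t l c.2.
Proof.
move=> Hc; rewrite /rr Hc /=.
under eq_bigr do rewrite mulr1 /bcM mulrDl.
rewrite big_split /= -big_distrr /=; congr (_ + _).
rewrite (bigD1 a) //= eqxx big1 ?addr0 // => l Hl.
by rewrite eq_sym (negbTE Hl) mul0r.
Qed.

Lemma lik_gt0 t : forall (a : 'I_k) T, 0 < lik theta t a T.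
Proof.
elim: t => [|t IH] a T; first by rewrite /= ltr01.
rewrite lik_S; apply: prodr_gt0 => c _.
case Hc: c.1 => [l'|].
  by rewrite (rr_lab _ _ _ _ Hc); apply: mulr_gt0; [exact: bcM_gt0 | exact: IH].
rewrite (rr_unlab _ _ _ Hc).
have h1 : 0 < theta * lik theta t a c.2 by apply: mulr_gt0 => //.
have h2 : 0 < \sum_(l < k) lik theta t l c.2.
  rewrite (bigD1 a) //=; have := IH a c.2.
  have : 0 <= \sum_(i < k | i != a) lik theta t i c.2.
    by apply: sumr_ge0 => l _; exact: ltW.
  move=> ? ?; lra.
have h3 := mulr_gt0 q_gt0 h2; lra.
Qed.

Lemma sum_lik_gt0 t T (a : 'I_k) : 0 < \sum_(l < k) lik theta t l T.
Proof.
rewrite (bigD1 a) //=; have := lik_gt0 t a T.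
have : 0 <= \sum_(i < k | i != a) lik theta t i T.
  by apply: sumr_ge0 => l _; exact/ltW/lik_gt0.
move=> ? ?; lra.
Qed.

Lemma post_gt0 t (a : 'I_k) T : 0 < post theta t a T.
Proof.
rewrite /post -big_distrr /=; apply: divr_gt0.
  by apply: mulr_gt0; [rewrite invr_gt0; exact: kR_gt0 | exact: lik_gt0].
by apply: mulr_gt0; [rewrite invr_gt0; exact: kR_gt0 | exact: sum_lik_gt0].
Qed.

Lemma post_ratio t (a b : 'I_k) T :
  post theta t a T / post theta t b T = lik theta t a T / lik theta t b T.
Proof.
rewrite /post -!big_distrr /=.
have hk := kR_gt0; have hS := sum_lik_gt0 t T a; have hb := lik_gt0 t b T.
field; repeat split; apply/eqP; rewrite ?invr_eq0; apply/eqP; lra.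
Qed.

Lemma rr_gt0 t c a : 0 < rr t c a.
Proof. by have := lik_gt0 t.+1 a (BNode [:: c]); rewrite lik_S big_seq1. Qed.

Lemma ln_prod (I : Type) (s : seq I) (P : pred I) (F : I -> R) :
  (forall x, 0 < F x) ->
  ln (\prod_(x <- s | P x) F x) = \sum_(x <- s | P x) ln (F x).
Proof.
move=> HF; elim: s => [|x s IH]; first by rewrite !big_nil ln1.
rewrite !big_cons; case: (P x) => //.
rewrite lnM ?IH // posrE //; exact: prodr_gt0.
Qed.


Lemma rr_lab_ratio t c (a b l' : 'I_k) : c.1 = Some l' ->
  rr t c a / rr t c b = rr 0 c a / rr 0 c b.
Proof.
move=> Hc; rewrite !(rr_lab _ _ _ _ Hc) /=.
have h1 := bcM_gt0 b l'; have h2 := lik_gt0 t l' c.2.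
field; apply/andP; split; apply/eqP; lra.
Qed.

Lemma rr0_unlab c (a : 'I_k) : c.1 = None -> rr 0 c a = 1.
Proof.
move=> Hc; rewrite (rr_unlab _ _ _ Hc) /= sumr_const card_ord mulr1.
have hk := kR_gt0; field; apply/eqP; lra.
Qed.

Lemma rr_unlab_ratio t c (a b : 'I_k) : c.1 = None ->
  rr t c a / rr t c b =
  (1 + k%:R * theta / (1 - theta) * post theta t a c.2) /
  (1 + k%:R * theta / (1 - theta) * post theta t b c.2).
Proof.
move=> Hc; rewrite !(rr_unlab _ _ _ Hc) /post -!big_distrr /=.
have hk := kR_gt0; have hS := sum_lik_gt0 t c.2 a.
have ha := lik_gt0 t a c.2; have hb := lik_gt0 t b c.2.
set S := \sum_(l < k) _ in hS *.
set xa := lik theta t a c.2 in ha *.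
set xb := lik theta t b c.2 in hb *.
have h1 : 0 < (1 - theta) * S by apply: mulr_gt0 => //; rewrite subr_gt0.
have h2 : 0 < k%:R * theta * xb by apply: mulr_gt0 => //; apply: mulr_gt0.
have h3 : 0 < 1 - theta by rewrite subr_gt0.
field; apply/and4P; split; apply/eqP; lra.
Qed.

End Aux.

Arguments rr {R k}.

Theorem lemma1 (R : realType) (k : nat) (theta : R)
  (htheta0 : 0 < theta) (htheta1 : theta < 1)
  (T : btree k) (i j : 'I_k) (hij : i != j) (t : nat) (ht : (2 <= t)%N) :
  ln (post theta t i T / post theta t j T) =
  ln (post theta 1 i T / post theta 1 j T) +
  \sum_(c <- children T | c.1 == None)
     ln ((1 + k%:R * theta / (1 - theta) * post theta t.-1 i c.2) /
         (1 + k%:R * theta / (1 - theta) * post theta t.-1 j c.2)).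
Proof.
have kpos : (0 < k)%N := leq_ltn_trans (leq0n i) (ltn_ord i).
case: t ht => [|[|t']] // _ /=.
rewrite !(post_ratio _ _ _ htheta0 htheta1 kpos) !lik_S -!prodf_div.
set E := fun c : option 'I_k * btree k =>
  (1 + k%:R * theta / (1 - theta) * post theta t'.+1 i c.2) /
  (1 + k%:R * theta / (1 - theta) * post theta t'.+1 j c.2).
have pos t0 c : 0 < rr theta t0 c i / rr theta t0 c j.
  by apply: divr_gt0; apply: (rr_gt0 _ _ _ htheta0 htheta1 kpos).
rewrite (bigID (fun c => c.1 == None)) /=.
rewrite [X in _ = ln X + _](bigID (fun c => c.1 == None)) /=.
have -> : \prod_(c <- children T | c.1 == None) (rr theta 0 c i / rr theta 0 c j) = 1.
  rewrite big1 // => c /eqP Hc; rewrite !(rr0_unlab _ _ _ kpos _ _ Hc).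
  by rewrite divr1.
have -> : \prod_(c <- children T | c.1 == None) (rr theta t'.+1 c i / rr theta t'.+1 c j)
   = \prod_(c <- children T | c.1 == None) E c.
  by apply: eq_bigr => c /eqP Hc; rewrite (rr_unlab_ratio _ _ _ htheta0 htheta1 kpos _ _ _ _ Hc).
have -> : \prod_(c <- children T | c.1 != None) (rr theta t'.+1 c i / rr theta t'.+1 c j)
   = \prod_(c <- children T | c.1 != None) (rr theta 0 c i / rr theta 0 c j).
  apply: eq_bigr => c; case Hc: c.1 => [l'|] // _.
  exact: (rr_lab_ratio _ _ _ htheta0 htheta1 kpos _ _ _ _ _ Hc).
have Epos c : 0 < E c.
  have hK : 0 < k%:R * theta / (1 - theta).
    apply: divr_gt0; [apply: mulr_gt0 => //; by rewrite ltr0n | by rewrite subr_gt0].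
  rewrite /E; apply: divr_gt0; apply: addr_gt0 => //; apply: mulr_gt0 => //;
    exact: (post_gt0 _ _ _ htheta0 htheta1 kpos).
rewrite mul1r lnM ?posrE; last 2 first.
- by apply: prodr_gt0 => c _.
- by apply: prodr_gt0 => c _.
rewrite (ln_prod _ _ _ _ _ Epos) addrC.
by [].
Qed.
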